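(* Let $I\subset\mathbb R$ be a bounded closed non-degenerate interval, $r\ge1$, and let $f:I\to\overline{\mathbb R}$ be non-decreasing with $f\in L^r(I)$. Let $a,b\in\mathbb R$ with $a<b$. Then the function $$\psi(\xi)=\big\|f-\big(a\mathbf 1_{[\min I,\xi[}+b\mathbf 1_{[\xi,\max I]}\big)\big\|_{L^r(I)},\qquad \xi\in I,$$ attains its minimal value at $\xi$ if and only if $\xi\in Q^f_{(a+b)/2}$.
   Context: For a non-decreasing $f:I\to\overline{\mathbb R}$ on a closed non-degenerate interval $I$ and $t\in\overline{\mathbb R}$, the $t$-quantile set is $Q^f_t=[\inf\{x\in I:f(x)\ge t\},\ \sup\{x\in I:f(x)\le t\}]$, with the conventions $\inf\varnothing=\max I$, $\sup\varnothing=\min I$. *)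

(* Defs.v *)
From Stdlib Require Import Reals Lra.
Open Scope R_scope.

Inductive ERbar : Type := Fin (x : R) | PInf | NInf.

Definition ERle (x y : ERbar) : Prop :=
  match x, y with
  | NInf, _ => True
  | _, PInf => True
  | Fin u, Fin v => u <= v
  | _, _ => False
  end.

(* real part (used only where f is finite) *)
Definition ER_real (x : ERbar) : R := match x with Fin u => u | _ => 0 end.

Definition is_finite_ER (x : ERbar) : Prop := exists u, x = Fin u.

(* |x|^p, with the convention |0|^p = 0 (p > 0) *)
Definition rpow_abs (x p : R) : R :=
  if Req_EM_T x 0 then 0 else Rpower (Rabs x) p.

Definition nondecreasing_on (lo hi : R) (f : R -> ERbar) : Prop :=
  forall x y, lo <= x -> x <= y -> y <= hi -> ERle (f x) (f y).

(* Lebesgue integral over [lo,hi] of a nonnegative function h that is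
   Riemann integrable on compact subintervals of ]lo,hi[, rendered as the
   improper Riemann integral: the supremum of the integrals over [c,d]
   with lo < c < d < hi.  [integral_nonneg lo hi h V] : integral equals V
   (finite). *)
Definition compact_integrals (lo hi : R) (h : R -> R) (v : R) : Prop :=
  exists c d, lo < c /\ c < d /\ d < hi /\
    exists pr : Riemann_integrable h c d, RiemannInt pr = v.

Definition integral_nonneg (lo hi : R) (h : R -> R) (V : R) : Prop :=
  is_lub (compact_integrals lo hi h) V.

Definition in_Lr (lo hi r : R) (f : R -> ERbar) : Prop :=
  (forall x, lo < x < hi -> is_finite_ER (f x)) /\
  exists V, integral_nonneg lo hi (fun x => rpow_abs (ER_real (f x)) r) V.

Definition Lr_dist (lo hi r : R) (f : R -> ERbar) (g : R -> R) (N : R) : Prop :=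
  exists V, integral_nonneg lo hi (fun x => rpow_abs (ER_real (f x) - g x) r) V
            /\ N = rpow_abs V (/ r).

Definition step_fun (a b xi : R) (x : R) : R :=
  if Rlt_dec x xi then a else b.

Definition is_glb (E : R -> Prop) (m : R) : Prop :=
  (forall x, E x -> m <= x) /\ (forall b, (forall x, E x -> b <= x) -> b <= m).

(* Quantile set Q^f_t = [inf{x in I : f x >= t}, sup{x in I : f x <= t}],
   inf of empty = max I = hi, sup of empty = min I = lo. *)
Definition quantile_lo (lo hi : R) (f : R -> ERbar) (t : ERbar) (L : R) : Prop :=
  let S := fun x => lo <= x <= hi /\ ERle t (f x) in
  ((exists x, S x) /\ is_glb S L) \/ ((forall x, ~ S x) /\ L = hi).

Definition quantile_hi (lo hi : R) (f : R -> ERbar) (t : ERbar) (U : R) : Prop :=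
  let S := fun x => lo <= x <= hi /\ ERle (f x) t in
  ((exists x, S x) /\ is_lub S U) \/ ((forall x, ~ S x) /\ U = lo).

Definition in_quantile (lo hi : R) (f : R -> ERbar) (t : ERbar) (xi : R) : Prop :=
  exists L U, quantile_lo lo hi f t L /\ quantile_hi lo hi f t U /\ L <= xi <= U.

(* Main.v *)
Require Import Defs.
From Coquelicot Require Import Coquelicot.
From Stdlib Require Import Reals Lra ClassicalEpsilon Classical.
Open Scope R_scope.

Lemma Rpower_1_base x : Rpower 1 x = 1.
Proof. unfold Rpower. rewrite ln_1, Rmult_0_r. apply exp_0. Qed.

Lemma pw_nonneg p s : 0 <= rpow_abs s p.
Proof. unfold rpow_abs. destruct (Req_EM_T s 0). lra. unfold Rpower. left; apply exp_pos. Qed.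

Lemma pw_abs p s : rpow_abs s p = rpow_abs (Rabs s) p.
Proof.
  unfold rpow_abs. destruct (Req_EM_T s 0); destruct (Req_EM_T (Rabs s) 0).
  - auto.
  - subst. rewrite Rabs_R0 in n. lra.
  - exfalso. apply n. destruct (Rcase_abs s); [rewrite Rabs_left in e|rewrite Rabs_right in e]; lra.
  - rewrite Rabs_Rabsolu. auto.
Qed.

Lemma pw_zero p : rpow_abs 0 p = 0.
Proof. unfold rpow_abs. destruct (Req_EM_T 0 0); lra. Qed.

Lemma pw_pos p s : s <> 0 -> 0 < rpow_abs s p.
Proof. intros. unfold rpow_abs. destruct (Req_EM_T s 0). lra. apply exp_pos. Qed.

Lemma pw_mono p s s' : 0 <= p -> Rabs s <= Rabs s' -> rpow_abs s p <= rpow_abs s' p.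
Proof.
  intros Hp H. unfold rpow_abs at 1. destruct (Req_EM_T s 0). apply pw_nonneg.
  unfold rpow_abs. destruct (Req_EM_T s' 0).
  - subst. rewrite Rabs_R0 in H. pose proof (Rabs_pos s). assert (Rabs s = 0) by lra.
    destruct (Rcase_abs s); [rewrite Rabs_left in H1|rewrite Rabs_right in H1]; lra.
  - apply Rle_Rpower_l. auto. split; auto. apply Rabs_pos_lt; auto.
Qed.

Lemma pw_lt p s s' : 0 < p -> Rabs s < Rabs s' -> rpow_abs s p < rpow_abs s' p.
Proof.
  intros Hp H. assert (s' <> 0). { intro; subst. rewrite Rabs_R0 in H. pose proof (Rabs_pos s). lra. }
  unfold rpow_abs at 1. destruct (Req_EM_T s 0). apply pw_pos; auto.
  unfold rpow_abs. destruct (Req_EM_T s' 0). contradiction.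
  apply Rlt_Rpower_l. auto. split; auto. apply Rabs_pos_lt; auto.
Qed.

Lemma pw_mul p s s' : rpow_abs (s * s') p = rpow_abs s p * rpow_abs s' p.
Proof.
  destruct (Req_EM_T s 0). subst. rewrite Rmult_0_l, pw_zero. ring.
  destruct (Req_EM_T s' 0). subst. rewrite Rmult_0_r, pw_zero. ring.
  unfold rpow_abs. destruct (Req_EM_T (s*s') 0).
  apply Rmult_integral in e; tauto.
  destruct (Req_EM_T s 0); try contradiction. destruct (Req_EM_T s' 0); try contradiction.
  rewrite Rabs_mult. rewrite Rpower_mult_distr; auto; apply Rabs_pos_lt; auto.
Qed.

Lemma pw_le_self p l : 1 <= p -> 0 <= l <= 1 -> rpow_abs l p <= l.
Proof.
  intros Hp Hl. unfold rpow_abs. destruct (Req_EM_T l 0). lra.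
  rewrite Rabs_right by lra.
  replace p with (1 + (p - 1)) by ring. rewrite Rpower_plus, Rpower_1 by lra.
  assert (Rpower l (p-1) <= 1).
  { pose proof (Rpower_1_base (p-1)) as E1. rewrite <- E1 at 2. apply Rle_Rpower_l; lra. }
  assert (0 < l) by lra. nra.
Qed.

Lemma pw_superadd p s g : 1 <= p -> 0 <= s -> 0 <= g ->
  rpow_abs s p + rpow_abs g p <= rpow_abs (s + g) p.
Proof.
  intros Hp Hs Hg. destruct (Req_EM_T (s+g) 0).
  - assert (s = 0) by lra. assert (g = 0) by lra. subst. rewrite !pw_zero. pose proof (pw_nonneg p (0+0)). lra.
  - set (T := s + g). assert (0 < T) by (unfold T; lra). assert (HT: T = s + g) by reflexivity. clearbody T.
    replace s with ((s/T) * T) at 1 by (field; lra).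
    replace g with ((g/T) * T) at 1 by (field; lra).
    rewrite !pw_mul.
    assert (rpow_abs (s/T) p <= s/T).
    { apply pw_le_self; auto. split. unfold Rdiv; apply Rmult_le_pos; [lra| left; apply Rinv_0_lt_compat; lra].
      apply Rmult_le_reg_r with T; auto. unfold Rdiv. rewrite Rmult_assoc, Rinv_l by lra. rewrite HT; lra. }
    assert (rpow_abs (g/T) p <= g/T).
    { apply pw_le_self; auto. split. unfold Rdiv; apply Rmult_le_pos; [lra| left; apply Rinv_0_lt_compat; lra].
      apply Rmult_le_reg_r with T; auto. unfold Rdiv. rewrite Rmult_assoc, Rinv_l by lra. rewrite HT; lra. }
    pose proof (pw_nonneg p T).
    apply Rle_trans with ((s/T + g/T) * rpow_abs T p). nra.
    replace (s/T + g/T) with 1 by (rewrite HT; field; lra). lra.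
Qed.

Lemma Rabs_le_inv' x y : Rabs x <= y -> -y <= x <= y.
Proof. unfold Rabs; destruct (Rcase_abs x); lra. Qed.
Lemma Rabs_lt_inv' x y : Rabs x < y -> -y < x < y.
Proof. unfold Rabs; destruct (Rcase_abs x); lra. Qed.

Lemma RiemannInt_cv f a b (pr : Riemann_integrable f a b) :
  Un_cv (fun N => RiemannInt_SF (phi_sequence RinvN pr N)) (RiemannInt pr).
Proof. unfold RiemannInt. destruct (RiemannInt_exists pr RinvN RinvN_cv). auto. Qed.

Lemma sandwich f a b : a <= b ->
 (forall eps, 0 < eps -> exists g1 g2 (p1 : Riemann_integrable g1 a b) (p2 : Riemann_integrable g2 a b),
    (forall x, a <= x <= b -> g1 x <= f x <= g2 x) /\ RiemannInt p2 - RiemannInt p1 < eps) ->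
 Riemann_integrable f a b.
Proof.
  intros Hab H eps.
  assert (He : 0 < eps / 4) by (destruct eps; simpl; lra).
  destruct (constructive_indefinite_description _ (H _ He)) as [g1 H1].
  destruct (constructive_indefinite_description _ H1) as [g2 H2].
  destruct (constructive_indefinite_description _ H2) as [p1 H3].
  destruct (constructive_indefinite_description _ H3) as [p2 [Hg Hd]].
  clear H1 H2 H3.
  pose (pd := RiemannInt_P10 (-1) p2 p1).
  assert (Epd : RiemannInt pd = RiemannInt p2 + (-1) * RiemannInt p1) by apply RiemannInt_P13.
  assert (Pd : 0 <= RiemannInt pd).
  { replace 0 with (RiemannInt (RiemannInt_P14 a b 0)) by (rewrite RiemannInt_P15; ring). apply RiemannInt_P19; auto.
    intros x Hx. unfold fct_cte. destruct (Hg x); lra. }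
  assert (exN : exists N : nat, Rabs (RiemannInt_SF (phi_sequence RinvN pd N) - RiemannInt pd) < eps/4 /\ RinvN N < eps/4).
  { destruct (RiemannInt_cv _ _ _ pd (eps/4) ltac:(lra)) as [N1 HN1].
    destruct (RinvN_cv He) as [N2 HN2].
    exists (max N1 N2). split. apply (HN1 (max N1 N2) (Nat.le_max_l _ _)).
    specialize (HN2 (max N1 N2) (Nat.le_max_r _ _)). unfold Rdist in HN2. rewrite Rminus_0_r in HN2.
    rewrite Rabs_right in HN2; auto. left. apply (cond_pos (RinvN _)). }
  destruct (constructive_indefinite_description _ exN) as [N [A1 A2]].
  set (phi2 := phi_sequence RinvN pd N) in *.
  destruct (phi_sequence_prop RinvN pd N) as [psi2 [Hp2 Hi2]]. fold phi2 in Hp2.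
  destruct (p1 (mkposreal _ He)) as [phi1 [psi1 [Hp1 Hi1]]]. simpl in Hi1.
  exists phi1.
  exists (mkStepFun (StepFun_P28 1 (mkStepFun (StepFun_P28 1 psi1 phi2)) psi2)).
  split.
  - intros t Ht. simpl.
    specialize (Hp1 t Ht). specialize (Hp2 t Ht).
    rewrite Rmin_left, Rmax_right in Ht by auto. specialize (Hg t Ht).
    apply Rabs_le_inv' in Hp1. apply Rabs_le_inv' in Hp2.
    apply Rabs_le. lra.
  - rewrite StepFun_P30. simpl. rewrite StepFun_P30.
    apply Rabs_lt_inv' in Hi1. apply Rabs_lt_inv' in Hi2. apply Rabs_lt_inv' in A1.
    apply Rabs_def1; lra.
Qed.

Section Mono.
Variable g : R -> R.
Variable h : R.
Hypothesis Hh : 0 < h.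

Fixpoint upf (n : nat) (x0 x : R) : R :=
  match n with O => g x0 | S m => if Rle_dec x (x0 + h) then g (x0 + h) else upf m (x0 + h) x end.
Fixpoint lowf (n : nat) (x0 x : R) : R :=
  match n with O => g x0 | S m => if Rle_dec x (x0 + h) then g x0 else lowf m (x0 + h) x end.
Fixpoint sumu (n : nat) (x0 : R) : R :=
  match n with O => 0 | S m => h * g (x0 + h) + sumu m (x0 + h) end.
Fixpoint suml (n : nat) (x0 : R) : R :=
  match n with O => 0 | S m => h * g x0 + suml m (x0 + h) end.

Lemma INR_S_mul n x0 : x0 + INR (S n) * h = (x0 + h) + INR n * h.
Proof. rewrite S_INR. ring. Qed.

Lemma upf_int n : forall x0, is_RInt (upf n x0) x0 (x0 + INR n * h) (sumu n x0).
Proof.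
  induction n as [|m IH]; intros x0.
  - simpl. rewrite Rmult_0_l, Rplus_0_r. 
    exact (is_RInt_point _ _).
  - rewrite INR_S_mul. simpl.
    assert (H1 : is_RInt (upf (S m) x0) x0 (x0 + h) (h * g (x0 + h))).
    { apply (is_RInt_ext (fun _ => g (x0 + h))).
      2: { pose proof (is_RInt_const x0 (x0 + h) (g (x0 + h))) as C; match type of C with is_RInt _ _ _ ?v => replace v with (h * g (x0 + h)) in C by (unfold scal; simpl; unfold mult; simpl; ring) end; exact C. }
      intros x Hx. rewrite Rmin_left, Rmax_right in Hx by lra. simpl.
      destruct (Rle_dec x (x0 + h)); lra. }
    assert (H2 : is_RInt (upf (S m) x0) (x0 + h) (x0 + h + INR m * h) (sumu m (x0 + h))).
    { apply (is_RInt_ext (upf m (x0 + h))). 2: apply IH.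
      intros x Hx. pose proof (pos_INR m). rewrite Rmin_left, Rmax_right in Hx by nra. simpl.
      destruct (Rle_dec x (x0 + h)); [lra|auto]. }
    pose proof (is_RInt_Chasles _ _ _ _ _ _ H1 H2) as H3.
    match type of H3 with is_RInt _ _ _ ?v => replace v with (h * g (x0 + h) + sumu m (x0 + h)) in H3 by (unfold plus, scal; simpl; unfold mult; simpl; ring) end.
    exact H3.
Qed.

Lemma lowf_int n : forall x0, is_RInt (lowf n x0) x0 (x0 + INR n * h) (suml n x0).
Proof.
  induction n as [|m IH]; intros x0.
  - simpl. rewrite Rmult_0_l, Rplus_0_r. 
    exact (is_RInt_point _ _).
  - rewrite INR_S_mul. simpl.
    assert (H1 : is_RInt (lowf (S m) x0) x0 (x0 + h) (h * g x0)).
    { apply (is_RInt_ext (fun _ => g x0)).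
      2: { pose proof (is_RInt_const x0 (x0 + h) (g x0)) as C; match type of C with is_RInt _ _ _ ?v => replace v with (h * g x0) in C by (unfold scal; simpl; unfold mult; simpl; ring) end; exact C. }
      intros x Hx. rewrite Rmin_left, Rmax_right in Hx by lra. simpl.
      destruct (Rle_dec x (x0 + h)); lra. }
    assert (H2 : is_RInt (lowf (S m) x0) (x0 + h) (x0 + h + INR m * h) (suml m (x0 + h))).
    { apply (is_RInt_ext (lowf m (x0 + h))). 2: apply IH.
      intros x Hx. pose proof (pos_INR m). rewrite Rmin_left, Rmax_right in Hx by nra. simpl.
      destruct (Rle_dec x (x0 + h)); [lra|auto]. }
    pose proof (is_RInt_Chasles _ _ _ _ _ _ H1 H2) as H3.
    match type of H3 with is_RInt _ _ _ ?v => replace v with (h * g x0 + suml m (x0 + h)) in H3 by (unfold plus, scal; simpl; unfold mult; simpl; ring) end.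
    exact H3.
Qed.

Lemma sum_diff n : forall x0, sumu n x0 - suml n x0 = h * (g (x0 + INR n * h) - g x0).
Proof.
  induction n as [|m IH]; intros x0.
  - simpl. rewrite Rmult_0_l, Rplus_0_r. ring.
  - rewrite INR_S_mul. simpl. specialize (IH (x0 + h)). lra.
Qed.

Lemma sandwich_pts n : forall x0,
  (forall u v, x0 <= u -> u <= v -> v <= x0 + INR n * h -> g u <= g v) ->
  forall x, x0 <= x <= x0 + INR n * h -> lowf n x0 x <= g x <= upf n x0 x.
Proof.
  induction n as [|m IH]; intros x0 Hg x Hx.
  - simpl in *. assert (x = x0) by lra. subst. lra.
  - rewrite INR_S_mul in Hg, Hx. pose proof (pos_INR m). simpl.
    destruct (Rle_dec x (x0 + h)).
    + split; apply Hg; nra.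
    + apply IH. intros u v Hu Huv Hv. apply Hg; lra. lra.
Qed.
End Mono.

Lemma mono_RI (g : R -> R) a b : a <= b ->
  (forall u v, a <= u -> u <= v -> v <= b -> g u <= g v) -> Riemann_integrable g a b.
Proof.
  intros Hab Hg. destruct (Req_EM_T a b) as [E|Hne].
  { subst. apply RiemannInt_P7. }
  apply sandwich. auto.
  intros eps Heps.
  assert (Hgab : g a <= g b) by (apply Hg; lra).
  set (K := (b - a) * (g b - g a) + 1).
  assert (HK : 0 < K) by (unfold K; nra).
  destruct (archimed_cor1 (eps / K)) as [N [HN HN0]].
  { apply Rdiv_lt_0_compat; lra. }
  assert (HNr : 0 < INR N) by (apply lt_0_INR; auto).
  set (h := (b - a) / INR N).
  assert (Hh : 0 < h) by (unfold h; apply Rdiv_lt_0_compat; lra).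
  assert (Eb : a + INR N * h = b) by (unfold h; field; lra).
  pose proof (lowf_int g h Hh N a) as IL. pose proof (upf_int g h Hh N a) as IU.
  rewrite Eb in IL, IU.
  pose (p1 := ex_RInt_Reals_0 _ _ _ (ex_intro _ _ IL)).
  pose (p2 := ex_RInt_Reals_0 _ _ _ (ex_intro _ _ IU)).
  exists (lowf g h N a), (upf g h N a), p1, p2. split.
  - intros x Hx. apply sandwich_pts; auto; rewrite Eb; auto.
  - rewrite <- !RInt_Reals. rewrite (is_RInt_unique _ _ _ _ IL), (is_RInt_unique _ _ _ _ IU).
    rewrite sum_diff, Eb. unfold h.
    apply Rle_lt_trans with (K / INR N).
    + unfold K. apply Rmult_le_reg_r with (INR N); auto. field_simplify; try lra.
    + apply Rmult_lt_reg_r with (/ K). apply Rinv_0_lt_compat; auto.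
      replace (K / INR N * / K) with (/ INR N) by (field; lra). lra.
Qed.

Lemma antimono_RI (g : R -> R) a b : a <= b ->
  (forall u v, a <= u -> u <= v -> v <= b -> g v <= g u) -> Riemann_integrable g a b.
Proof.
  intros Hab Hg.
  apply Riemann_integrable_ext with (fun x => - (- g x)). intros; ring.
  apply Riemann_integrable_Ropp. apply mono_RI; auto.
  intros u v Hu Huv Hv. specialize (Hg u v Hu Huv Hv). lra.
Qed.

Lemma mono_ex_RInt (g : R -> R) a b : a <= b ->
  (forall u v, a <= u -> u <= v -> v <= b -> g u <= g v) -> ex_RInt g a b.
Proof. intros. apply ex_RInt_Reals_1. apply mono_RI; auto. Qed.

Lemma antimono_ex_RInt (g : R -> R) a b : a <= b ->
  (forall u v, a <= u -> u <= v -> v <= b -> g v <= g u) -> ex_RInt g a b.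
Proof.
  intros Hab Hg. apply ex_RInt_Reals_1.
  apply Riemann_integrable_ext with (fun x => - (- g x)). intros; ring.
  apply Riemann_integrable_Ropp. apply mono_RI; auto.
  intros u v Hu Huv Hv. specialize (Hg u v Hu Huv Hv). lra.
Qed.

Lemma exR_Ch1 (f : R -> R) a b c : a <= b <= c -> ex_RInt f a c -> ex_RInt f a b.
Proof. intros H1 H2. exact (@ex_RInt_Chasles_1 R_CompleteNormedModule f a b c H1 H2). Qed.
Lemma exR_Ch2 (f : R -> R) a b c : a <= b <= c -> ex_RInt f a c -> ex_RInt f b c.
Proof. intros H1 H2. exact (@ex_RInt_Chasles_2 R_CompleteNormedModule f a b c H1 H2). Qed.
Lemma exR_Ch (f : R -> R) a b c : ex_RInt f a b -> ex_RInt f b c -> ex_RInt f a c.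
Proof. intros H1 H2. exact (@ex_RInt_Chasles R_NormedModule f a b c H1 H2). Qed.
Lemma R_Ch (f : R -> R) a b c : ex_RInt f a b -> ex_RInt f b c -> RInt f a b + RInt f b c = RInt f a c.
Proof. intros H1 H2. exact (@RInt_Chasles R_CompleteNormedModule f a b c H1 H2). Qed.

Lemma CI_iff lo hi h v : compact_integrals lo hi h v <->
  exists c d, lo < c /\ c < d /\ d < hi /\ ex_RInt h c d /\ RInt h c d = v.
Proof.
  split.
  - intros [c [d [H1 [H2 [H3 [pr E]]]]]]. exists c, d. repeat split; auto.
    apply ex_RInt_Reals_1; auto. rewrite (RInt_Reals _ _ _ pr). auto.
  - intros [c [d [H1 [H2 [H3 [Hex E]]]]]]. exists c, d. repeat split; auto.
    exists (ex_RInt_Reals_0 _ _ _ Hex). rewrite <- RInt_Reals. auto.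
Qed.

Lemma V_nonneg lo hi h V : (forall x, 0 <= h x) -> is_lub (compact_integrals lo hi h) V -> 0 <= V.
Proof.
  intros Hh [Hub Hl].
  destruct (classic (exists v, compact_integrals lo hi h v)) as [[v Hv]|Hn].
  - pose proof (Hub v Hv). apply CI_iff in Hv.
    destruct Hv as [c [d [H1 [H2 [H3 [Hex E]]]]]]. subst v.
    assert (0 <= RInt h c d) by (apply RInt_ge_0; auto; lra). lra.
  - assert (V <= V - 1). { apply Hl. intros x Hx. exfalso. apply Hn. eauto. } lra.
Qed.

Lemma le_point (f1 f2 : R -> R) a b p : a <= b -> ex_RInt f1 a b -> ex_RInt f2 a b ->
  (forall x, a < x < b -> x <> p -> f1 x <= f2 x) -> RInt f1 a b <= RInt f2 a b.
Proof.
  intros Hab E1 E2 H.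
  destruct (classic (a < p < b)) as [Hp|Hp].
  - assert (A1 : ex_RInt f1 a p) by (apply (exR_Ch1 _ a p b); auto; lra).
    assert (A2 : ex_RInt f1 p b) by (apply (exR_Ch2 _ a p b); auto; lra).
    assert (B1 : ex_RInt f2 a p) by (apply (exR_Ch1 _ a p b); auto; lra).
    assert (B2 : ex_RInt f2 p b) by (apply (exR_Ch2 _ a p b); auto; lra).
    assert (C1 : RInt f1 a p + RInt f1 p b = RInt f1 a b) by exact (R_Ch f1 a p b A1 A2).
    assert (C2 : RInt f2 a p + RInt f2 p b = RInt f2 a b) by exact (R_Ch f2 a p b B1 B2).
    rewrite <- C1, <- C2.
    apply Rplus_le_compat; apply RInt_le; try lra; try exact A1; try exact A2; try exact B1; try exact B2; intros x Hx; apply H; lra.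

  - apply RInt_le; auto. intros x Hx. apply H; auto. intro; subst. apply Hp; auto.
Qed.

Lemma lub_le lo hi (h1 h2 : R -> R) p V1 V2 :
  (forall c d, lo < c -> c <= d -> d < hi -> ex_RInt h1 c d /\ ex_RInt h2 c d) ->
  (forall x, lo < x < hi -> x <> p -> h1 x <= h2 x) ->
  is_lub (compact_integrals lo hi h1) V1 -> is_lub (compact_integrals lo hi h2) V2 -> V1 <= V2.
Proof.
  intros Hint Hle [_ Hl1] [Hu2 _].
  apply Hl1. intros v Hv. apply CI_iff in Hv.
  destruct Hv as [c [d [H1 [H2 [H3 [Hex E]]]]]]. subst v.
  destruct (Hint c d) as [E1 E2]; try lra.
  apply Rle_trans with (RInt h2 c d).
  - apply le_point with p; auto; try lra. intros x Hx Hxp. apply Hle; auto; lra.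
  - apply Hu2. apply CI_iff. exists c, d. repeat split; auto.
Qed.

Lemma RInt_plus_const (f : R -> R) a b dl : ex_RInt f a b ->
  ex_RInt (fun x => f x + dl) a b /\ RInt (fun x => f x + dl) a b = RInt f a b + dl * (b - a).
Proof.
  intros E. assert (Ec : ex_RInt (fun _ : R => dl) a b) by apply ex_RInt_const.
  split.
  - apply (ex_RInt_plus f (fun _ => dl) a b E Ec).
  - transitivity (plus (RInt f a b) (RInt (fun _ : R => dl) a b)).
    + rewrite <- RInt_plus; auto.
    + rewrite RInt_const. unfold plus, scal; simpl. unfold mult; simpl. ring.
Qed.

Lemma RInt_scal_R (f : R -> R) a b K : ex_RInt f a b ->
  ex_RInt (fun x => K * f x) a b /\ RInt (fun x => K * f x) a b = K * RInt f a b.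
Proof.
  intros E. split.
  - apply (ex_RInt_scal f a b K E).
  - transitivity (scal K (RInt f a b)).
    + rewrite <- RInt_scal; auto.
    + reflexivity.
Qed.

Lemma exR_ext (f g : R -> R) a b : (forall x, Rmin a b < x < Rmax a b -> f x = g x) -> ex_RInt f a b -> ex_RInt g a b.
Proof. intros H1 H2. exact (@ex_RInt_ext R_NormedModule f g a b H1 H2). Qed.

Lemma ERle_trans x y z : ERle x y -> ERle y z -> ERle x z.
Proof. destruct x, y, z; simpl; intros; auto; try lra; contradiction. Qed.

Lemma Rmax_mono u v : u <= v -> Rmax u 0 <= Rmax v 0.
Proof. unfold Rmax; destruct (Rle_dec u 0), (Rle_dec v 0); lra. Qed.

Lemma pw_split r u : rpow_abs u r = rpow_abs (Rmax u 0) r + rpow_abs (Rmax (-u) 0) r.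
Proof.
  unfold Rmax. destruct (Rle_dec u 0), (Rle_dec (-u) 0).
  - assert (u = 0) by lra. subst. rewrite !pw_zero. ring.
  - rewrite pw_zero, (pw_abs r u), (pw_abs r (-u)), Rabs_Ropp. ring.
  - rewrite pw_zero. ring.
  - lra.
Qed.

Section Main.
Variables (lo hi r : R) (f : R -> ERbar) (a b : R).
Hypothesis Hlohi : lo < hi.
Hypothesis Hr : 1 <= r.
Hypothesis Hmono : nondecreasing_on lo hi f.
Hypothesis HLr : in_Lr lo hi r f.
Hypothesis Hab : a < b.

Definition Hs (eta : R) (x : R) := rpow_abs (ER_real (f x) - step_fun a b eta x) r.
Definition G (k : R) (x : R) := rpow_abs (ER_real (f x) - k) r.

Lemma fin x : lo < x < hi -> f x = Fin (ER_real (f x)).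
Proof. intros Hx. destruct HLr as [Hf _]. destruct (Hf x Hx) as [u Hu]. rewrite Hu. reflexivity. Qed.

Lemma F_mono x y : lo < x -> x <= y -> y < hi -> ER_real (f x) <= ER_real (f y).
Proof.
  intros H1 H2 H3. pose proof (Hmono x y ltac:(lra) H2 ltac:(lra)) as Hm.
  rewrite (fin x), (fin y) in Hm by lra. exact Hm.
Qed.

Lemma G_RI k c d : lo < c -> c <= d -> d < hi -> Riemann_integrable (G k) c d.
Proof.
  intros Hc Hcd Hd.
  apply Riemann_integrable_ext with
    (fun x => rpow_abs (Rmax (ER_real (f x) - k) 0) r + 1 * rpow_abs (Rmax (- (ER_real (f x) - k)) 0) r).
  { intros x _. unfold G. rewrite (pw_split r (ER_real (f x) - k)). ring. }
  apply RiemannInt_P10.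
  - apply mono_RI; auto. intros u v Hu Huv Hv. apply pw_mono; [lra|].
    assert (E := F_mono u v ltac:(lra) Huv ltac:(lra)).
    assert (M := Rmax_mono (ER_real (f u) - k) (ER_real (f v) - k) ltac:(lra)).
    rewrite !Rabs_right; try lra; apply Rle_ge; apply Rmax_r.
  - apply antimono_RI; auto. intros u v Hu Huv Hv. apply pw_mono; [lra|].
    assert (E := F_mono u v ltac:(lra) Huv ltac:(lra)).
    assert (M := Rmax_mono (- (ER_real (f v) - k)) (- (ER_real (f u) - k)) ltac:(lra)).
    rewrite !Rabs_right; try lra; apply Rle_ge; apply Rmax_r.
Qed.

Lemma G_int k c d : lo < c -> c <= d -> d < hi -> ex_RInt (G k) c d.
Proof. intros. apply ex_RInt_Reals_1. apply G_RI; auto. Qed.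

Lemma H_int eta c d : lo < c -> c <= d -> d < hi -> ex_RInt (Hs eta) c d.
Proof.
  intros Hc Hcd Hd.
  destruct (Rle_or_lt eta c) as [E1|E1].
  - apply exR_ext with (G b). 2: apply G_int; auto.
    intros x Hx. rewrite Rmin_left, Rmax_right in Hx by lra.
    unfold G, Hs, step_fun. destruct (Rlt_dec x eta); [lra|auto].
  - destruct (Rle_or_lt d eta) as [E2|E2].
    + apply exR_ext with (G a). 2: apply G_int; auto.
      intros x Hx. rewrite Rmin_left, Rmax_right in Hx by lra.
      unfold G, Hs, step_fun. destruct (Rlt_dec x eta); [auto|lra].
    + apply exR_Ch with eta.
      * apply exR_ext with (G a). 2: apply G_int; lra.
        intros x Hx. rewrite Rmin_left, Rmax_right in Hx by lra.
        unfold G, Hs, step_fun. destruct (Rlt_dec x eta); [auto|lra].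
      * apply exR_ext with (G b). 2: apply G_int; lra.
        intros x Hx. rewrite Rmin_left, Rmax_right in Hx by lra.
        unfold G, Hs, step_fun. destruct (Rlt_dec x eta); [lra|auto].
Qed.

Lemma pw_bound u s M : Rabs s <= M -> 0 < M ->
  rpow_abs (u - s) r <= rpow_abs 2 r * (rpow_abs u r + rpow_abs M r).
Proof.
  intros Hs HM.
  assert (rpow_abs (u - s) r <= rpow_abs (2 * Rmax (Rabs u) M) r).
  { apply pw_mono; [lra|]. rewrite Rabs_mult, (Rabs_right 2) by lra.
    rewrite (Rabs_right (Rmax _ _)). 2: { apply Rle_ge. apply Rle_trans with M; [lra|apply Rmax_r]. }
    pose proof (Rabs_triang u (-s)). rewrite Rabs_Ropp in H.
    pose proof (Rmax_l (Rabs u) M). pose proof (Rmax_r (Rabs u) M). unfold Rminus. lra. }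
  rewrite pw_mul in H.
  assert (rpow_abs (Rmax (Rabs u) M) r <= rpow_abs u r + rpow_abs M r).
  { unfold Rmax. destruct (Rle_dec (Rabs u) M).
    - pose proof (pw_nonneg r u). lra.
    - rewrite <- pw_abs. pose proof (pw_nonneg r M). lra. }
  pose proof (pw_nonneg r 2). nra.
Qed.

Definition CI h := compact_integrals lo hi h.

Lemma V_exists eta : exists V, is_lub (CI (Hs eta)) V.
Proof.
  destruct HLr as [_ [Vf HVf]].
  set (M := Rabs a + Rabs b + 1).
  assert (HM : 0 < M) by (unfold M; pose proof (Rabs_pos a); pose proof (Rabs_pos b); lra).
  set (K := rpow_abs 2 r). set (C := rpow_abs M r).
  assert (HK : 0 <= K) by apply pw_nonneg. assert (HC : 0 <= C) by apply pw_nonneg.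
  set (G0 := fun x => rpow_abs (ER_real (f x)) r).
  assert (HG0 : forall c d, lo < c -> c <= d -> d < hi -> ex_RInt G0 c d).
  { intros c d H1 H2 H3. apply exR_ext with (G 0). 2: apply G_int; auto.
    intros. unfold G, G0. rewrite Rminus_0_r. auto. }
  assert (Hb : bound (CI (Hs eta))).
  { exists (K * (Vf + C * (hi - lo))). intros v Hv. apply CI_iff in Hv.
    destruct Hv as [c [d [H1 [H2 [H3 [Hex E]]]]]]. subst v.
    destruct (RInt_plus_const G0 c d C (HG0 c d H1 ltac:(lra) H3)) as [E1 E2].
    destruct (RInt_scal_R (fun x => G0 x + C) c d K E1) as [E3 E4].
    apply Rle_trans with (RInt (fun x => K * (G0 x + C)) c d).
    - apply RInt_le; try lra; auto.
      intros x Hx. unfold Hs, G0. apply pw_bound; auto.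
      unfold step_fun, M. pose proof (Rabs_pos a); pose proof (Rabs_pos b).
      destruct (Rlt_dec x eta); lra.
    - rewrite E4, E2. apply Rmult_le_compat_l; auto.
      assert (RInt G0 c d <= Vf).
      { destruct HVf as [Hu _]. apply Hu. apply CI_iff. exists c, d. repeat split; auto; apply HG0; lra. }
      assert (C * (d - c) <= C * (hi - lo)) by (apply Rmult_le_compat_l; lra). lra. }
  assert (Hne : exists v, CI (Hs eta) v).
  { exists (RInt (Hs eta) (lo + (hi - lo)/3) (lo + 2 * (hi - lo) / 3)).
    apply CI_iff. exists (lo + (hi - lo)/3), (lo + 2 * (hi - lo) / 3). repeat split; try lra.
    apply H_int; lra. }
  destruct (completeness _ Hb Hne) as [V HV]. exists V. exact HV.
Qed.

Lemma Lr_of eta V : is_lub (CI (Hs eta)) V -> Lr_dist lo hi r f (step_fun a b eta) (rpow_abs V (/ r)).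
Proof. intros H. exists V. split; auto. Qed.

End Main.

Lemma lub_lt lo hi (hs hb : R -> R) p P Q dl Vs Vb :
  (forall c d, lo < c -> c <= d -> d < hi -> ex_RInt hs c d /\ ex_RInt hb c d) ->
  (forall x, 0 <= hs x) ->
  (forall x, lo < x < hi -> x <> p -> hs x <= hb x) ->
  (forall x, P < x < Q -> hs x + dl <= hb x) ->
  lo < P -> P < Q -> Q < hi -> 0 < dl ->
  is_lub (compact_integrals lo hi hs) Vs -> is_lub (compact_integrals lo hi hb) Vb -> Vs < Vb.
Proof.
  intros Hint Hnn Hle Hgap HP HPQ HQ Hdl [_ Hls] [Hub _].
  assert (Vs <= Vb - dl * (Q - P)).
  { apply Hls. intros v Hv. apply CI_iff in Hv.
    destruct Hv as [c [d [H1 [H2 [H3 [Hex E]]]]]]. subst v.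
    set (c' := Rmin c P). set (d' := Rmax d Q).
    assert (Hc1 : c' <= c) by apply Rmin_l. assert (Hc2 : c' <= P) by apply Rmin_r.
    assert (Hd1 : d <= d') by apply Rmax_l. assert (Hd2 : Q <= d') by apply Rmax_r.
    assert (Hc3 : lo < c'). { unfold c', Rmin. destruct (Rle_dec c P); lra. }
    assert (Hd3 : d' < hi). { unfold d', Rmax. destruct (Rle_dec d Q); lra. }
    assert (I := fun u v (H1 : c' <= u) (H2 : u <= v) (H3 : v <= d') => Hint u v ltac:(lra) H2 ltac:(lra)).
    assert (S1 : RInt hs c d <= RInt hs c' d').
    { destruct (I c' c) as [A _]; try lra. destruct (I c d') as [B _]; try lra.
      destruct (I c d) as [B1 _]; try lra. destruct (I d d') as [B2 _]; try lra.
      rewrite <- (R_Ch hs c' c d' A B), <- (R_Ch hs c d d' B1 B2).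
      assert (0 <= RInt hs c' c) by (apply RInt_ge_0; auto).
      assert (0 <= RInt hs d d') by (apply RInt_ge_0; auto). lra. }
    assert (S2 : RInt hs c' d' + dl * (Q - P) <= RInt hb c' d').
    { destruct (I c' P) as [A1 B1]; try lra. destruct (I P d') as [A2 B2]; try lra.
      destruct (I P Q) as [A3 B3]; try lra. destruct (I Q d') as [A4 B4]; try lra.
      rewrite <- (R_Ch hs c' P d' A1 A2), <- (R_Ch hs P Q d' A3 A4).
      rewrite <- (R_Ch hb c' P d' B1 B2), <- (R_Ch hb P Q d' B3 B4).
      assert (RInt hs c' P <= RInt hb c' P).
      { apply le_point with p; auto. intros; apply Hle; auto; lra. }
      assert (RInt hs Q d' <= RInt hb Q d').
      { apply le_point with p; auto. intros; apply Hle; auto; lra. }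
      destruct (RInt_plus_const hs P Q dl A3) as [E1 E2].
      assert (RInt (fun x => hs x + dl) P Q <= RInt hb P Q).
      { apply RInt_le; auto; lra. }
      lra. }
    assert (S3 : RInt hb c' d' <= Vb).
    { apply Hub. apply CI_iff. exists c', d'. destruct (I c' d') as [_ B]; try lra.
      repeat split; auto; lra. }
    lra. }
  assert (0 < dl * (Q - P)) by (apply Rmult_lt_0_compat; lra). lra.
Qed.

Lemma below_L lo hi f T L : quantile_lo lo hi f T L ->
  forall x, lo <= x <= hi -> x < L -> ~ ERle T (f x).
Proof.
  intros [[_ [Hlb _]]|[Hn _]] x Hx HxL HT.
  - assert (L <= x) by (apply Hlb; split; auto). lra.
  - apply (Hn x). split; auto.
Qed.

Lemma above_U lo hi f T U : quantile_hi lo hi f T U ->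
  forall x, lo <= x <= hi -> U < x -> ~ ERle (f x) T.
Proof.
  intros [[_ [Hub _]]|[Hn _]] x Hx HxU HT.
  - assert (x <= U) by (apply Hub; split; auto). lra.
  - apply (Hn x). split; auto.
Qed.

Lemma above_L lo hi f T L : quantile_lo lo hi f T L ->
  forall x, lo <= x <= hi -> L < x -> exists y, lo <= y <= hi /\ ERle T (f y) /\ y < x.
Proof.
  intros [[_ [_ Hgl]]|[_ E]] x Hx HLx.
  - apply NNPP. intro Hn. assert (x <= L).
    { apply Hgl. intros y [Hy HTy]. destruct (Rle_or_lt x y); auto. exfalso; apply Hn. exists y; auto. }
    lra.
  - lra.
Qed.

Lemma below_U lo hi f T U : quantile_hi lo hi f T U ->
  forall x, lo <= x <= hi -> x < U -> exists y, lo <= y <= hi /\ ERle (f y) T /\ x < y.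
Proof.
  intros [[_ [_ Hl]]|[_ E]] x Hx HxU.
  - apply NNPP. intro Hn. assert (U <= x).
    { apply Hl. intros y [Hy HTy]. destruct (Rle_or_lt y x); auto. exfalso; apply Hn. exists y; auto. }
    lra.
  - lra.
Qed.

Lemma exists_L lo hi f T : lo <= hi -> exists L, quantile_lo lo hi f T L /\ lo <= L <= hi.
Proof.
  intros Hlh.
  destruct (classic (exists x, lo <= x <= hi /\ ERle T (f x))) as [Hne|Hn].
  - set (E := fun y => lo <= - y <= hi /\ ERle T (f (- y))).
    assert (Hb : bound E). { exists (- lo). intros y [Hy _]. lra. }
    assert (HneE : exists y, E y). { destruct Hne as [x Hx]. exists (- x). unfold E. rewrite Ropp_involutive. auto. }
    destruct (completeness E Hb HneE) as [m [Hm1 Hm2]].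
    destruct Hne as [x0 Hx0].
    assert (Hglb : is_glb (fun x => lo <= x <= hi /\ ERle T (f x)) (- m)).
    { split.
      - intros x Hx. assert (- x <= m). { apply Hm1. unfold E. rewrite Ropp_involutive. auto. } lra.
      - intros bd Hbd. assert (m <= - bd).
        { apply Hm2. intros y Hy. assert (bd <= - y) by (apply Hbd; exact Hy). lra. } lra. }
    exists (- m). split. left. split; [exists x0; auto| auto].
    destruct Hglb as [H1 H2]. split.
    + apply H2. intros x Hx. destruct Hx; lra.
    + apply Rle_trans with x0. apply H1; auto. lra.
  - exists hi. split. right. split; auto. intros x Hx. apply Hn. exists x. exact Hx. lra.
Qed.

Lemma exists_U lo hi f T : lo <= hi -> exists U, quantile_hi lo hi f T U /\ lo <= U <= hi.
Proof.
  intros Hlh.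
  destruct (classic (exists x, lo <= x <= hi /\ ERle (f x) T)) as [Hne|Hn].
  - set (E := fun x => lo <= x <= hi /\ ERle (f x) T).
    assert (Hb : bound E). { exists hi. intros y [Hy _]. lra. }
    destruct (completeness E Hb Hne) as [m [Hm1 Hm2]].
    destruct Hne as [x0 Hx0].
    exists m. split. left. split; [exists x0; auto| split; auto].
    split.
    + apply Rle_trans with x0. lra. apply Hm1; auto.
    + apply Hm2. intros x Hx. destruct Hx; lra.
  - exists lo. split. right. split; auto. intros x Hx. apply Hn. exists x. exact Hx. lra.
Qed.

Theorem lemma4p1 (lo hi r : R) (f : R -> ERbar) (a b : R)
  (Hlohi : lo < hi) (Hr : 1 <= r)
  (Hmono : nondecreasing_on lo hi f) (HLr : in_Lr lo hi r f)
  (Hab : a < b) (xi : R) (Hxi : lo <= xi <= hi) :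
  (forall eta, lo <= eta <= hi ->
     forall Nxi Neta,
       Lr_dist lo hi r f (step_fun a b xi) Nxi ->
       Lr_dist lo hi r f (step_fun a b eta) Neta ->
       Nxi <= Neta)
  <-> in_quantile lo hi f (Fin ((a + b) / 2)) xi.
Proof.
  pose proof (H_int lo hi r f a b Hr Hmono HLr) as Hint.
  pose proof (V_exists lo hi r f a b Hlohi Hr Hmono HLr) as Vex.
  pose proof (F_mono lo hi r f Hmono HLr) as Fm.
  pose proof (fin lo hi r f HLr) as Hfin.
  set (t := (a + b) / 2).
  assert (Hrpos : 0 < / r) by (apply Rinv_0_lt_compat; lra).
  assert (Hnn : forall eta x, 0 <= Hs r f a b eta x) by (intros; apply pw_nonneg).
  assert (Hint2 : forall e1 e2 c d, lo < c -> c <= d -> d < hi ->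
            ex_RInt (Hs r f a b e1) c d /\ ex_RInt (Hs r f a b e2) c d).
  { intros; split; apply Hint; auto. }
  assert (absL : forall u, u <= t -> Rabs (u - a) <= Rabs (u - b)).
  { intros u Hu. unfold t in Hu. unfold Rabs; destruct (Rcase_abs (u - a)), (Rcase_abs (u - b)); lra. }
  assert (absR : forall u, t <= u -> Rabs (u - b) <= Rabs (u - a)).
  { intros u Hu. unfold t in Hu. unfold Rabs; destruct (Rcase_abs (u - a)), (Rcase_abs (u - b)); lra. }
  assert (gapL : forall u uq, u <= uq -> uq < t -> Rabs (u - a) + Rmin (b - a) (2 * (t - uq)) <= Rabs (u - b)).
  { intros u uq H1 H2. unfold t in *. pose proof (Rmin_l (b - a) (2 * ((a + b) / 2 - uq))).
    pose proof (Rmin_r (b - a) (2 * ((a + b) / 2 - uq))).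
    unfold Rabs; destruct (Rcase_abs (u - a)), (Rcase_abs (u - b)); lra. }
  assert (gapR : forall u up, up <= u -> t < up -> Rabs (u - b) + Rmin (b - a) (2 * (up - t)) <= Rabs (u - a)).
  { intros u up H1 H2. unfold t in *. pose proof (Rmin_l (b - a) (2 * (up - (a + b) / 2))).
    pose proof (Rmin_r (b - a) (2 * (up - (a + b) / 2))).
    unfold Rabs; destruct (Rcase_abs (u - a)), (Rcase_abs (u - b)); lra. }
  assert (pwgap : forall s g w, 0 <= g -> Rabs s + g <= Rabs w -> rpow_abs s r + rpow_abs g r <= rpow_abs w r).
  { intros s g w Hg Hw. rewrite (pw_abs r s).
    apply Rle_trans with (rpow_abs (Rabs s + g) r).
    - apply pw_superadd; auto. apply Rabs_pos.
    - apply pw_mono; [lra|]. rewrite (Rabs_right (Rabs s + g)); auto.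
      pose proof (Rabs_pos s). lra. }
  split.
  - intros Hmin.
    destruct (exists_L lo hi f (Fin t) ltac:(lra)) as [L [HL HLr']].
    destruct (exists_U lo hi f (Fin t) ltac:(lra)) as [U [HU HUr]].
    exists L, U. split; auto. split; auto. split.
    + destruct (Rle_or_lt L xi) as [|HxL]; auto. exfalso.
      destruct (Vex xi) as [Vx HVx]. destruct (Vex L) as [VL HVL].
      pose proof (Hmin L HLr' _ _ (Lr_of _ _ _ _ _ _ _ _ HVx) (Lr_of _ _ _ _ _ _ _ _ HVL)) as Hc.
      set (P := xi + (L - xi) / 3). set (Q := xi + 2 * (L - xi) / 3).
      set (uq := ER_real (f Q)).
      assert (Huq : uq < t).
      { pose proof (below_L _ _ _ _ _ HL Q ltac:(unfold Q; lra) ltac:(unfold Q; lra)) as HQ.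
        rewrite Hfin in HQ by (unfold Q; lra). simpl in HQ. apply Rnot_le_lt. exact HQ. }
      set (g := Rmin (b - a) (2 * (t - uq))).
      assert (Hg : 0 < g). { unfold g, Rmin. destruct (Rle_dec (b - a) (2 * (t - uq))); lra. }
      assert (VL < Vx).
      { apply (lub_lt lo hi (Hs r f a b L) (Hs r f a b xi) xi P Q (rpow_abs g r)); auto.
        - intros x Hx Hxp. unfold Hs, step_fun.
          destruct (Rlt_dec x L), (Rlt_dec x xi); try lra.
          apply pw_mono; [lra|]. apply absL.
          pose proof (below_L _ _ _ _ _ HL x ltac:(lra) r0) as HQ.
          rewrite Hfin in HQ by lra. simpl in HQ. lra.
        - intros x Hx. unfold Hs, step_fun.
          destruct (Rlt_dec x L); [|unfold P, Q in Hx; lra].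
          destruct (Rlt_dec x xi); [unfold P, Q in Hx; lra|].
          apply pwgap; [lra|]. apply (gapL _ uq); auto.
          apply Fm; unfold P, Q in *; lra.
        - unfold P; lra.
        - unfold P, Q; lra.
        - unfold Q; lra.
        - apply pw_pos. lra. }
      pose proof (V_nonneg _ _ _ _ (Hnn L) HVL).
      assert (rpow_abs VL (/ r) < rpow_abs Vx (/ r)).
      { apply pw_lt; auto. rewrite !Rabs_right; lra. }
      lra.
    + destruct (Rle_or_lt xi U) as [|HxU]; auto. exfalso.
      destruct (Vex xi) as [Vx HVx]. destruct (Vex U) as [VU HVU].
      pose proof (Hmin U HUr _ _ (Lr_of _ _ _ _ _ _ _ _ HVx) (Lr_of _ _ _ _ _ _ _ _ HVU)) as Hc.
      set (P := U + (xi - U) / 3). set (Q := U + 2 * (xi - U) / 3).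
      set (up := ER_real (f P)).
      assert (Hup : t < up).
      { pose proof (above_U _ _ _ _ _ HU P ltac:(unfold P; lra) ltac:(unfold P; lra)) as HP.
        rewrite Hfin in HP by (unfold P; lra). simpl in HP. apply Rnot_le_lt. exact HP. }
      set (g := Rmin (b - a) (2 * (up - t))).
      assert (Hg : 0 < g). { unfold g, Rmin. destruct (Rle_dec (b - a) (2 * (up - t))); lra. }
      assert (VU < Vx).
      { apply (lub_lt lo hi (Hs r f a b U) (Hs r f a b xi) U P Q (rpow_abs g r)); auto.
        - intros x Hx Hxp. unfold Hs, step_fun.
          destruct (Rlt_dec x U), (Rlt_dec x xi); try lra.
          apply pw_mono; [lra|]. apply absR.
          pose proof (above_U _ _ _ _ _ HU x ltac:(lra) ltac:(lra)) as HQ.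
          rewrite Hfin in HQ by lra. simpl in HQ. lra.
        - intros x Hx. unfold Hs, step_fun.
          destruct (Rlt_dec x U); [unfold P, Q in Hx; lra|].
          destruct (Rlt_dec x xi); [|unfold P, Q in Hx; lra].
          apply pwgap; [lra|]. apply (gapR _ up); auto.
          apply Fm; unfold P, Q in *; lra.
        - unfold P; lra.
        - unfold P, Q; lra.
        - unfold Q; lra.
        - apply pw_pos. lra. }
      pose proof (V_nonneg _ _ _ _ (Hnn U) HVU).
      assert (rpow_abs VU (/ r) < rpow_abs Vx (/ r)).
      { apply pw_lt; auto. rewrite !Rabs_right; lra. }
      lra.
  - intros [L [U [HL [HU [HLx HxU]]]]] eta Heta Nxi Neta [V1 [HV1 E1]] [V2 [HV2 E2]]. subst Nxi Neta.
    change (is_lub (compact_integrals lo hi (Hs r f a b xi)) V1) in HV1.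
    change (is_lub (compact_integrals lo hi (Hs r f a b eta)) V2) in HV2.
    assert (V1 <= V2).
    { apply (lub_le lo hi (Hs r f a b xi) (Hs r f a b eta) xi V1 V2); auto.
      intros x Hx Hxp. unfold Hs, step_fun. destruct (Rle_or_lt xi eta).
      - destruct (Rlt_dec x xi), (Rlt_dec x eta); try lra.
        apply pw_mono; [lra|]. apply absR.
        destruct (above_L _ _ _ _ _ HL x ltac:(lra) ltac:(lra)) as [y [Hy [HTy Hyx]]].
        pose proof (Hmono y x ltac:(lra) ltac:(lra) ltac:(lra)) as Hyx'.
        pose proof (ERle_trans _ _ _ HTy Hyx') as HH. rewrite Hfin in HH by lra. exact HH.
      - destruct (Rlt_dec x xi), (Rlt_dec x eta); try lra.
        apply pw_mono; [lra|]. apply absL.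
        destruct (below_U _ _ _ _ _ HU x ltac:(lra) ltac:(lra)) as [y [Hy [HTy Hyx]]].
        pose proof (Hmono x y ltac:(lra) ltac:(lra) ltac:(lra)) as Hyx'.
        pose proof (ERle_trans _ _ _ Hyx' HTy) as HH. rewrite Hfin in HH by lra. exact HH. }
    pose proof (V_nonneg _ _ _ _ (Hnn xi) HV1).
    apply pw_mono; [lra|]. rewrite !Rabs_right; lra.
Qed.
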